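(* Let $i\colon\mathcal{A}\to\mathcal{A}'$ and $j\colon\mathcal{B}\to\mathcal{B}'$ be inclusions of cofinal full additive subcategories, and let $F\colon\mathcal{A}\to\mathcal{B}$ and $F'\colon\mathcal{A}'\to\mathcal{B}'$ be functors of additive categories with $j\circ F=F'\circ i$. Then: (1) the inclusion $i$ is faithfully flat; (2) $F$ is flat (respectively faithfully flat) if and only if $F'$ is flat (respectively faithfully flat).
   Context: A full additive subcategory $\mathcal{A}\subseteq\mathcal{A}'$ is cofinal if for every object $A'$ of $\mathcal{A}'$ there exist an object $A$ of $\mathcal{A}$ and morphisms $A'\to A\to A'$ composing to $\mathrm{id}_{A'}$. A sequence $A_0\xrightarrow{f}A_1\xrightarrow{g}A_2$ in an additive category is exact (at $A_1$) if $g\circ f=0$ and every morphism $h\colon A\to A_1$ with $g\circ h=0$ factors as $h=f\circ\bar h$. A functor $F$ of additive categories is flat if it maps exact sequences to exact sequences, and faithfully flat if a sequence is exact if and only if its image under $F$ is exact. *)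

(* Defs.v *)
From HB Require Import structures.
From mathcomp Require Import all_boot all_algebra.
Set Implicit Arguments. Unset Strict Implicit. Unset Printing Implicit Defensive.
Import GRing.Theory.
Local Open Scope ring_scope.

Record PreAdd := {
  Ob : Type;
  Hom : Ob -> Ob -> zmodType;
  comp : forall a b c : Ob, Hom b c -> Hom a b -> Hom a c;
  idm : forall a : Ob, Hom a a;
  comp_assoc : forall a b c d (h : Hom c d) (g : Hom b c) (f : Hom a b),
      comp h (comp g f) = comp (comp h g) f;
  comp_id_l : forall a b (f : Hom a b), comp (idm b) f = f;
  comp_id_r : forall a b (f : Hom a b), comp f (idm a) = f;
  comp_addl : forall a b c (g1 g2 : Hom b c) (f : Hom a b),
      comp (g1 + g2) f = comp g1 f + comp g2 f;
  comp_addr : forall a b c (g : Hom b c) (f1 f2 : Hom a b),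
      comp g (f1 + f2) = comp g f1 + comp g f2
}.

Arguments comp {C a b c} : rename.
Arguments idm {C} a : rename.
Arguments Hom : clear implicits.

Definition is_additive (C : PreAdd) : Prop :=
  (exists z : Ob C, idm z = 0) /\
  (forall a b : Ob C, exists (s : Ob C) (i1 : Hom C a s) (i2 : Hom C b s)
       (p1 : Hom C s a) (p2 : Hom C s b),
       [/\ comp p1 i1 = idm a, comp p2 i2 = idm b,
           comp p1 i2 = 0, comp p2 i1 = 0 &
           comp i1 p1 + comp i2 p2 = idm s]).

Definition subcat (C : PreAdd) (P : Ob C -> Prop) : PreAdd :=
  {| Ob := {x : Ob C | P x};
     Hom := fun a b => Hom C (proj1_sig a) (proj1_sig b);
     comp := fun a b c g f => comp g f;
     idm := fun a => idm (proj1_sig a);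
     comp_assoc := fun a b c d h g f => comp_assoc h g f;
     comp_id_l := fun a b f => comp_id_l f;
     comp_id_r := fun a b f => comp_id_r f;
     comp_addl := fun a b c g1 g2 f => comp_addl g1 g2 f;
     comp_addr := fun a b c g f1 f2 => comp_addr g f1 f2 |}.

Definition full_additive_subcat (C : PreAdd) (P : Ob C -> Prop) : Prop :=
  is_additive (subcat P).

Definition cofinal (C : PreAdd) (P : Ob C -> Prop) : Prop :=
  forall a' : Ob C, exists (a : Ob C) (r : Hom C a' a) (s : Hom C a a'),
    P a /\ comp s r = idm a'.

Record AddFunctor (C D : PreAdd) := {
  Fob : Ob C -> Ob D;
  Fhom : forall a b : Ob C, Hom C a b -> Hom D (Fob a) (Fob b);
  Fhom_id : forall a, Fhom (idm a) = idm (Fob a);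
  Fhom_comp : forall a b c (g : Hom C b c) (f : Hom C a b),
      Fhom (comp g f) = comp (Fhom g) (Fhom f);
  Fhom_add : forall a b (f g : Hom C a b), Fhom (f + g) = Fhom f + Fhom g
}.

Arguments Fhom {C D} F {a b} f : rename.

Definition incl (C : PreAdd) (P : Ob C -> Prop) : AddFunctor (subcat P) C :=
  {| Fob := fun a : Ob (subcat P) => proj1_sig a;
     Fhom := fun (a b : Ob (subcat P)) (f : Hom (subcat P) a b) => (f : Hom C _ _);
     Fhom_id := fun a => erefl;
     Fhom_comp := fun a b c g f => erefl;
     Fhom_add := fun a b f g => erefl |}.

Definition exact_at (C : PreAdd) (a0 a1 a2 : Ob C)
    (f : Hom C a0 a1) (g : Hom C a1 a2) : Prop :=
  comp g f = 0 /\
  forall (a : Ob C) (h : Hom C a a1), comp g h = 0 ->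
    exists hb : Hom C a a0, h = comp f hb.

Definition flat (C D : PreAdd) (F : AddFunctor C D) : Prop :=
  forall (a0 a1 a2 : Ob C) (f : Hom C a0 a1) (g : Hom C a1 a2),
    exact_at f g -> exact_at (Fhom F f) (Fhom F g).

Definition faithfully_flat (C D : PreAdd) (F : AddFunctor C D) : Prop :=
  forall (a0 a1 a2 : Ob C) (f : Hom C a0 a1) (g : Hom C a1 a2),
    exact_at f g <-> exact_at (Fhom F f) (Fhom F g).

Definition castHom (C : PreAdd) (x x' y y' : Ob C)
    (e1 : x = x') (e2 : y = y') (f : Hom C x y) : Hom C x' y' :=
  match e1 in _ = x0, e2 in _ = y0 return Hom C x0 y0 with
  | erefl, erefl => f end.

Definition square_commutes (C' D' : PreAdd) (P : Ob C' -> Prop)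
    (Q : Ob D' -> Prop) (F : AddFunctor (subcat P) (subcat Q))
    (F' : AddFunctor C' D') : Prop :=
  exists E : forall a : Ob (subcat P), proj1_sig (Fob F a) = Fob F' (proj1_sig a),
    forall (a b : Ob (subcat P)) (f : Hom (subcat P) a b),
      castHom (E a) (E b) (Fhom F f) = Fhom F' (f : Hom C' _ _).

(* Main.v *)
Require Import Defs.
From mathcomp Require Import all_boot all_algebra.
Import Defs.
From Stdlib Require Import Setoid.
Set Implicit Arguments. Unset Strict Implicit. Unset Printing Implicit Defensive.
Import GRing.Theory.
Local Open Scope ring_scope.

Lemma comp0l (C : PreAdd) a b c (f : Hom C a b) : comp (0 : Hom C b c) f = 0.
Proof.
have H := comp_addl (0 : Hom C b c) 0 f; rewrite addr0 in H.
by apply: (@addrI _ (comp 0 f)); rewrite addr0 -H.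
Qed.

Lemma comp0r (C : PreAdd) a b c (g : Hom C b c) : comp g (0 : Hom C a b) = 0.
Proof.
have H := comp_addr g (0 : Hom C a b) 0; rewrite addr0 in H.
by apply: (@addrI _ (comp g 0)); rewrite addr0 -H.
Qed.

Lemma compNl (C : PreAdd) a b c (g : Hom C b c) (f : Hom C a b) :
  comp (- g) f = - comp g f.
Proof.
apply: (@addrI _ (comp g f)); rewrite subrr -comp_addl subrr; exact: comp0l.
Qed.

Lemma compNr (C : PreAdd) a b c (g : Hom C b c) (f : Hom C a b) :
  comp g (- f) = - comp g f.
Proof.
apply: (@addrI _ (comp g f)); rewrite subrr -comp_addr subrr; exact: comp0r.
Qed.

Lemma compBl (C : PreAdd) a b c (g1 g2 : Hom C b c) (f : Hom C a b) :
  comp (g1 - g2) f = comp g1 f - comp g2 f.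
Proof. by rewrite comp_addl compNl. Qed.

Lemma compBr (C : PreAdd) a b c (g : Hom C b c) (f1 f2 : Hom C a b) :
  comp g (f1 - f2) = comp g f1 - comp g f2.
Proof. by rewrite comp_addr compNr. Qed.

Lemma compK (C : PreAdd) a b c (s : Hom C b a) (r : Hom C a b) (x : Hom C c a) :
  comp s r = idm a -> comp s (comp r x) = x.
Proof. by move=> H; rewrite comp_assoc H comp_id_l. Qed.

Lemma compZ (C : PreAdd) a b c d (s : Hom C b d) (r : Hom C a b) (x : Hom C c a) :
  comp s r = 0 -> comp s (comp r x) = 0.
Proof. by move=> H; rewrite comp_assoc H comp0l. Qed.

Ltac norm1 := rewrite ?comp_addl ?comp_addr ?compNl ?compNr ?comp_id_l ?comp_id_r
  -?comp_assoc ?comp0l ?comp0r.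
Ltac norm := norm1; norm1; norm1.

Lemma key (C : PreAdd) (a0 a1 a2 b0 b1 b2 z : Ob C)
  (f : Hom C a0 a1) (g : Hom C a1 a2)
  (r0 : Hom C a0 b0) (s0 : Hom C b0 a0) (r1 : Hom C a1 b1) (s1 : Hom C b1 a1)
  (r2 : Hom C a2 b2) (s2 : Hom C b2 a2)
  (i1 : Hom C b0 z) (i2 : Hom C b1 z) (p1 : Hom C z b0) (p2 : Hom C z b1) :
  comp s0 r0 = idm _ -> comp s1 r1 = idm _ -> comp s2 r2 = idm _ ->
  comp p1 i1 = idm _ -> comp p2 i2 = idm _ -> comp p1 i2 = 0 -> comp p2 i1 = 0 ->
  exact_at f g <->
  exact_at (comp r1 (comp f (comp s0 p1)) + comp (idm b1 - comp r1 s1) p2)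
           (comp r2 (comp g s1)).
Proof.
move=> e0 e1 e2 q11 q22 q12 q21; split.
- case=> gf fac; split.
  + norm. rewrite (compK _ e1) (compK _ e1) subrr addr0.
    by rewrite (comp_assoc g f) gf comp0l comp0r.
  + move=> x h hh.
    have : comp g (comp s1 h) = 0.
      by move: hh; rewrite -!comp_assoc => hh; rewrite -(compK (comp g (comp s1 h)) e2) hh comp0r.
    case/fac=> k hk.
    exists (comp i1 (comp r0 k) + comp i2 h).
    norm. rewrite (compK _ q11) (compK _ q22) (compZ _ q21) (compZ _ q12) !comp0r.
    rewrite (compK _ e0) -hk.
    by rewrite oppr0 !addr0 !add0r addrC subrK.
- case=> c0 fac; split.
  + have H : comp s2 (comp (comp (comp r2 (comp g s1))
       (comp r1 (comp f (comp s0 p1)) + comp (idm b1 - comp r1 s1) p2)) (comp i1 r0)) = 0.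
      by rewrite c0 comp0l comp0r.
    move: H; norm. rewrite (compK _ q11) (compZ _ q21) !comp0r e0 comp_id_r (compK _ e2) (compK _ e1) subrr addr0.
    done.
  + move=> x h hh.
    have : comp (comp r2 (comp g s1)) (comp r1 h) = 0.
      by rewrite -!comp_assoc (compK _ e1) hh comp0r.
    case/fac=> k hk.
    exists (comp s0 (comp p1 k)).
    rewrite -(compK h e1) hk.
    by norm; rewrite !(compK _ e1) subrr addr0.
Qed.

Lemma sub_exact (C : PreAdd) (P : Ob C -> Prop) (cP : cofinal P)
  (x0 x1 x2 : Ob (subcat P)) (f : Hom (subcat P) x0 x1) (g : Hom (subcat P) x1 x2) :
  exact_at f g <-> @exact_at C _ _ _ f g.
Proof.
split.
- case=> c0 fac; split => // a h hh.
  case: (cP a) => [b [r [s [Pb e]]]].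
  case: (fac (exist _ b Pb) (comp h s)) => [|k hk].
    by rewrite /= comp_assoc hh comp0l.
  exists (@comp C a b (proj1_sig x0) k r).
  by move: hk => /= hk; rewrite comp_assoc -hk -comp_assoc e comp_id_r.
- case=> c0 fac; split => // a h hh; exact: fac.
Qed.

Lemma Fhom0 (C D : PreAdd) (G : AddFunctor C D) a b : Fhom G (0 : Hom C a b) = 0.
Proof.
have H := Fhom_add G (0 : Hom C a b) 0; rewrite addr0 in H.
by apply: (@addrI _ (Fhom G (0 : Hom C a b))); rewrite addr0 -H.
Qed.

Lemma FhomN (C D : PreAdd) (G : AddFunctor C D) a b (f : Hom C a b) :
  Fhom G (- f) = - Fhom G f.
Proof.
apply: (@addrI _ (Fhom G f)); rewrite subrr -Fhom_add subrr; exact: Fhom0.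
Qed.

Lemma FhomB (C D : PreAdd) (G : AddFunctor C D) a b (f g : Hom C a b) :
  Fhom G (f - g) = Fhom G f - Fhom G g.
Proof. by rewrite Fhom_add FhomN. Qed.

Lemma cast_exact (C : PreAdd) (x0 x0' x1 x1' x2 x2' : Ob C)
  (e0 : x0 = x0') (e1 : x1 = x1') (e2 : x2 = x2') (f : Hom C x0 x1) (g : Hom C x1 x2) :
  exact_at (castHom e0 e1 f) (castHom e1 e2 g) <-> exact_at f g.
Proof. by case: _ / e0; case: _ / e1; case: _ / e2. Qed.

Lemma key_F (C D : PreAdd) (G : AddFunctor C D) (a0 a1 a2 b0 b1 b2 z : Ob C)
  (f : Hom C a0 a1) (g : Hom C a1 a2)
  (r0 : Hom C a0 b0) (s0 : Hom C b0 a0) (r1 : Hom C a1 b1) (s1 : Hom C b1 a1)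
  (r2 : Hom C a2 b2) (s2 : Hom C b2 a2)
  (i1 : Hom C b0 z) (i2 : Hom C b1 z) (p1 : Hom C z b0) (p2 : Hom C z b1) :
  comp s0 r0 = idm _ -> comp s1 r1 = idm _ -> comp s2 r2 = idm _ ->
  comp p1 i1 = idm _ -> comp p2 i2 = idm _ -> comp p1 i2 = 0 -> comp p2 i1 = 0 ->
  exact_at (Fhom G f) (Fhom G g) <->
  exact_at (Fhom G (comp r1 (comp f (comp s0 p1)) + comp (idm b1 - comp r1 s1) p2))
           (Fhom G (comp r2 (comp g s1))).
Proof.
move=> e0 e1 e2 q11 q22 q12 q21.
rewrite !(Fhom_add, FhomN, Fhom_comp, Fhom_id).
apply: (@key _ _ _ _ _ _ _ _ _ _ (Fhom G r0) _ _ _ _ (Fhom G s2) (Fhom G i1) (Fhom G i2)).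
- by rewrite -Fhom_comp e0 Fhom_id.
- by rewrite -Fhom_comp e1 Fhom_id.
- by rewrite -Fhom_comp e2 Fhom_id.
- by rewrite -Fhom_comp q11 Fhom_id.
- by rewrite -Fhom_comp q22 Fhom_id.
- by rewrite -Fhom_comp q12 Fhom0.
- by rewrite -Fhom_comp q21 Fhom0.
Qed.

Lemma setup (C : PreAdd) (P : Ob C -> Prop) (hP : full_additive_subcat P)
  (cP : cofinal P) (a0 a1 a2 : Ob C) :
  exists (x0 x1 x2 xz : Ob (subcat P))
    (r0 : Hom C a0 (proj1_sig x0)) (s0 : Hom C (proj1_sig x0) a0)
    (r1 : Hom C a1 (proj1_sig x1)) (s1 : Hom C (proj1_sig x1) a1)
    (r2 : Hom C a2 (proj1_sig x2)) (s2 : Hom C (proj1_sig x2) a2)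
    (i1 : Hom C (proj1_sig x0) (proj1_sig xz)) (i2 : Hom C (proj1_sig x1) (proj1_sig xz))
    (p1 : Hom C (proj1_sig xz) (proj1_sig x0)) (p2 : Hom C (proj1_sig xz) (proj1_sig x1)),
    [/\ comp s0 r0 = idm _, comp s1 r1 = idm _, comp s2 r2 = idm _ &
        [/\ comp p1 i1 = idm _, comp p2 i2 = idm _, comp p1 i2 = 0 & comp p2 i1 = 0]].
Proof.
case: (cP a0) => [b0 [r0 [s0 [P0 e0]]]].
case: (cP a1) => [b1 [r1 [s1 [P1 e1]]]].
case: (cP a2) => [b2 [r2 [s2 [P2 e2]]]].
case: hP => _ /(_ (exist _ b0 P0) (exist _ b1 P1)) [xz [i1 [i2 [p1 [p2 [q11 q22 q12 q21 _]]]]]].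
by exists (exist _ b0 P0), (exist _ b1 P1), (exist _ b2 P2), xz,
  r0, s0, r1, s1, r2, s2, i1, i2, p1, p2.
Qed.

Theorem mainTheorem20 (A' B' : PreAdd) (P : Ob A' -> Prop) (Q : Ob B' -> Prop)
  (hA' : is_additive A') (hB' : is_additive B')
  (hP : full_additive_subcat P) (hQ : full_additive_subcat Q)
  (cP : cofinal P) (cQ : cofinal Q)
  (F : AddFunctor (subcat P) (subcat Q)) (F' : AddFunctor A' B')
  (hcomm : square_commutes F F') :
  faithfully_flat (incl P) /\
  (flat F <-> flat F') /\
  (faithfully_flat F <-> faithfully_flat F').
Proof.
case: hcomm => E HE.
have FF : forall (x0 x1 x2 : Ob (subcat P)) (f : Hom A' (proj1_sig x0) (proj1_sig x1))
    (g : Hom A' (proj1_sig x1) (proj1_sig x2)),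
    exact_at (Fhom F (f : Hom (subcat P) x0 x1)) (Fhom F (g : Hom (subcat P) x1 x2))
    <-> exact_at (Fhom F' f) (Fhom F' g).
  move=> x0 x1 x2 f g.
  rewrite -(HE x0 x1 f) -(HE x1 x2 g).
  exact: (iff_trans (sub_exact cQ _ _) (iff_sym (cast_exact _ _ _ _ _))).
split; first by move=> x0 x1 x2 f g; exact: sub_exact.
split; split.
- move=> fl a0 a1 a2 f g ex.
  have [x0 [x1 [x2 [xz [r0 [s0 [r1 [s1 [r2 [s2 [i1 [i2 [p1 [p2 [e0 e1 e2 [q11 q22 q12 q21]]]]]]]]]]]]]]]]
    := setup hP cP a0 a1 a2.
  rewrite (key_F F' f g e0 e1 e2 q11 q22 q12 q21).
  apply/(FF xz x1 x2).
  apply: fl.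
  apply/(sub_exact cP).
  exact/(key _ _ e0 e1 e2 q11 q22 q12 q21).
- move=> fl x0 x1 x2 f g ex.
  apply/(FF x0 x1 x2).
  apply: fl.
  exact/(sub_exact cP).
- move=> fl a0 a1 a2 f g.
  have [x0 [x1 [x2 [xz [r0 [s0 [r1 [s1 [r2 [s2 [i1 [i2 [p1 [p2 [e0 e1 e2 [q11 q22 q12 q21]]]]]]]]]]]]]]]]
    := setup hP cP a0 a1 a2.
  rewrite (key _ _ e0 e1 e2 q11 q22 q12 q21) (key_F F' f g e0 e1 e2 q11 q22 q12 q21).
  rewrite -(FF xz x1 x2) -(sub_exact cP).
  exact: fl.
- move=> fl x0 x1 x2 f g.
  rewrite (sub_exact cP) (FF x0 x1 x2).
  exact: fl.
Qed.
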